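(* For all $n\ge0$ and $y_1,\dots,y_n\in M$, $$K^{-1}(y_1\cdots y_n)=\sum_{\pi\ \text{set partition of}\ \{1,\dots,n\}}(y_1\cdots y_n)^\pi .$$
   Context: $\mathbf k$ field of characteristic zero; $(M,\rhd)$ a magmatic algebra; $T(M)$ its tensor algebra (concatenation, unit $\mathbf 1$), with $\rhd$ extended to $T(M)$ by $\mathbf 1\rhd W=W$, $x\rhd(VW)=(x\rhd V)W+V(x\rhd W)$, $(xV)\rhd W=x\rhd(V\rhd W)-(x\rhd V)\rhd W$ ($x\in M$). Gavrilov's $K$-map is the linear map $K:T(M)\to T(M)$ defined recursively by $K(\mathbf 1)=\mathbf 1$, $K(y)=y$ for $y\in M$, and $K(yU)=y\,K(U)-K(y\rhd U)$ for $y\in M$, $U\in T(M)$; it is invertible. For a set partition $\pi$ of $\{1,\dots,n\}$, its blocks $B_1,\dots,B_{|\pi|}$ are ordered so that $\max B_1<\dots<\max B_{|\pi|}$. For a block $B=\{b_1<\dots<b_\ell\}$ set $y_B:=y_{b_1}\rhd\big(y_{b_2}\rhd(\cdots\rhd(y_{b_{\ell-1}}\rhd y_{b_\ell})\cdots)\big)\in M$, and $(y_1\cdots y_n)^\pi:=y_{B_1}y_{B_2}\cdots y_{B_{|\pi|}}\in T(M)$. *)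

(* Defs.v *)
From HB Require Import structures.
From mathcomp Require Import all_boot all_order all_algebra.
Set Implicit Arguments.
Unset Strict Implicit.
Unset Printing Implicit Defensive.
Import GRing.Theory.
Local Open Scope ring_scope.

Section PartitionWord.
Variables (F : fieldType) (M : lmodType F) (rhdM : M -> M -> M).

Fixpoint nest_from (x : M) (s : seq M) : M :=
  match s with
  | [::] => x
  | x' :: s' => rhdM x (nest_from x' s')
  end.

Variable n : nat.
Variable y : 'I_n -> M.

(* y_B := y_{b1} ▷ (y_{b2} ▷ (... ▷ (y_{b(l-1)} ▷ y_{bl}))) for B = {b1 < ... < bl};
   the value on the empty block (which never occurs in a partition) is 0. *)
Definition block_val (B : {set 'I_n}) : M :=
  match sort (fun i j : 'I_n => (i <= j)%N) (enum B) with
  | [::] => 0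
  | b :: bs => nest_from (y b) (map y bs)
  end.

Definition block_max (B : {set 'I_n}) : nat := (\max_(i in B) (i : nat))%N.

Definition sorted_blocks (P : {set {set 'I_n}}) : seq {set 'I_n} :=
  sort (fun B C => (block_max B <= block_max C)%N) (enum P).

(* (y_1 ... y_n)^pi := y_{B_1} y_{B_2} ... y_{B_k} in the algebra A *)
Definition part_word (A : algType F) (iota : M -> A) (P : {set {set 'I_n}}) : A :=
  \prod_(B <- sorted_blocks P) iota (block_val B).

End PartitionWord.

(* Main.v *)
Require Import Defs.
From HB Require Import structures.
From mathcomp Require Import all_boot all_order all_algebra.
Import GRing.Theory.

Set Implicit Arguments.
Unset Strict Implicit.
Unset Printing Implicit Defensive.
Set Implicit Arguments. Unset Strict Implicit. Unset Printing Implicit Defensive.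

Section Comb.
Variable n : nat.
Definition lft : 'I_n -> 'I_n.+1 := lift ord0.
Definition pre (B : {set 'I_n.+1}) : {set 'I_n} := lft @^-1: B.
Definition liftS (B : {set 'I_n}) : {set 'I_n.+1} := lft @: B.

Lemma lft_inj : injective lft. Proof. exact: lift_inj. Qed.
Lemma lft_neq0 i : (lft i == ord0) = false.
Proof. by rewrite eq_sym (negbTE (neq_lift _ _)). Qed.

Lemma preS B : pre (liftS B) = B.
Proof. by apply/setP=> i; rewrite inE mem_imset //; exact: lft_inj. Qed.

Lemma pre0U B : pre (ord0 |: liftS B) = B.
Proof. by apply/setP=> i; rewrite !inE lft_neq0 mem_imset //; exact: lft_inj. Qed.

Lemma ord0_liftS B : (ord0 \in liftS B) = false.
Proof. by apply/imsetP=> -[i _ /eqP]; rewrite eq_sym lft_neq0. Qed.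

Lemma liftS_pre B : liftS (pre B) = B :\ ord0.
Proof.
apply/setP=> j; case: (unliftP ord0 j) => [i ->|->].
  by rewrite !inE (mem_imset _ _ lft_inj) inE lft_neq0.
by rewrite ord0_liftS !inE eqxx.
Qed.

Lemma liftS0 : liftS set0 = set0.
Proof. exact: imset0. Qed.

Definition gext (o B : {set 'I_n}) : {set 'I_n.+1} :=
  if B == o then ord0 |: liftS B else liftS B.

Lemma pre_gext o B : pre (gext o B) = B.
Proof. by rewrite /gext; case: eqP => _; rewrite ?pre0U ?preS. Qed.

Lemma gext_inj o : injective (gext o).
Proof. exact: can_inj (pre_gext o). Qed.

Definition ext (P : {set {set 'I_n}}) o := [set gext o B | B in o |: P].
Definition restrict (Q : {set {set 'I_n.+1}}) := [set pre B | B in Q] :\ set0.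
Definition hinv (Q : {set {set 'I_n.+1}}) := pre (pblock Q ord0).

Lemma L1 (Q : {set {set 'I_n.+1}}) :
  partition Q [set: 'I_n.+1] -> partition (restrict Q) [set: 'I_n].
Proof.
case/and3P=> /eqP covQ trQ nQ0; apply/and3P; split.
- apply/eqP/setP=> i; rewrite inE; apply/bigcupP.
  have : lft i \in cover Q by rewrite covQ inE.
  case/bigcupP=> B BQ iB; exists (pre B); last by rewrite inE.
  rewrite !inE imset_f ?andbT //.
  by apply/eqP=> /setP/(_ i); rewrite !inE iB.
- apply/trivIsetP=> C1 C2; rewrite !inE => /andP[_ /imsetP[B1 B1Q ->]].
  move=> /andP[_ /imsetP[B2 B2Q ->]] ne.
  have : B1 != B2 by apply: contraNneq ne => ->.
  move/(trivIsetP trQ _ _ B1Q B2Q); rewrite -!setI_eq0 -preimsetI => /eqP->.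
  by apply/eqP/setP=> i; rewrite !inE.
- by rewrite !inE eqxx.
Qed.
Lemma in_oP (P : {set {set 'I_n}}) o B i :
  o \in set0 |: P -> B \in o |: P -> i \in B -> B \in P.
Proof.
rewrite !inE => /orP[/eqP-> | oP] /orP[/eqP-> | //].
  by rewrite inE.
by [].
Qed.

Lemma gext_ord0 o B : (ord0 \in gext o B) = (B == o).
Proof. by rewrite /gext; case: eqP => _; rewrite ?ord0_liftS ?inE ?eqxx. Qed.

Lemma gext_lft o B i : (lft i \in gext o B) = (i \in B).
Proof. by rewrite -{2}(pre_gext o B) inE. Qed.

Lemma L2 (P : {set {set 'I_n}}) o :
  partition P [set: 'I_n] -> o \in set0 |: P -> partition (ext P o) [set: 'I_n.+1].
Proof.
case/and3P=> /eqP covP trP nP0 oP; apply/and3P; split.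
- apply/eqP/setP=> j; rewrite inE; apply/bigcupP.
  case: (unliftP ord0 j) => [i ->|->].
    have : i \in cover P by rewrite covP inE.
    case/bigcupP=> B BP iB; exists (gext o B).
      by apply: imset_f; rewrite inE BP orbT.
    by rewrite gext_lft.
  exists (gext o o); first by apply: imset_f; exact: setU11.
  by rewrite gext_ord0.
- apply/trivIsetP=> C1 C2 /imsetP[B1 B1P ->] /imsetP[B2 B2P ->] ne.
  have neB : B1 != B2 by apply: contraNneq ne => ->.
  rewrite -setI_eq0; apply/eqP/setP=> j; rewrite !inE; apply/negP=> /andP[j1 j2].
  move: j1 j2; case: (unliftP ord0 j) => [i ->|->].
    rewrite !gext_lft => i1 i2.
    have B1P' := in_oP oP B1P i1; have B2P' := in_oP oP B2P i2.
    by have := trivIsetP trP _ _ B1P' B2P' neB; move/disjointFr/(_ i1); rewrite i2.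
  by rewrite !gext_ord0 => /eqP e1 /eqP e2; move: neB; rewrite e1 e2 eqxx.
- apply/imsetP=> -[B BP /esym e].
  case: (B =P o) => [eBo | neBo].
    by have := gext_ord0 o B; rewrite e inE eBo eqxx.
  have BP' : B \in P by move: BP; rewrite in_setU1 => /orP[/eqP e0|]; [case: (neBo e0)|].
  have : B != set0 by apply: contraNneq nP0 => <-.
  case/set0Pn=> i iB; by have := gext_lft o B i; rewrite e inE iB.
Qed.
Lemma L3 (P : {set {set 'I_n}}) o :
  partition P [set: 'I_n] -> o \in set0 |: P -> restrict (ext P o) = P.
Proof.
case/and3P=> _ _ nP0 oP.
rewrite /restrict /ext -imset_comp (eq_imset _ (pre_gext o)) imset_id.
apply/setP=> C; rewrite in_setD1 in_setU1.
case CP: (C \in P); first by rewrite orbT andbT; apply: contraNneq nP0 => <-.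
rewrite orbF; apply/negbTE/negP=> /andP[nC0 /eqP eCo].
move: oP; rewrite in_setU1 -eCo (negbTE nC0) CP.
by [].
Qed.

Lemma hinv_ext (P : {set {set 'I_n}}) o :
  partition P [set: 'I_n] -> o \in set0 |: P -> hinv (ext P o) = o.
Proof.
move=> pP oP; have /and3P[_ tr _] := L2 pP oP.
rewrite /hinv (@def_pblock _ _ (gext o o)) ?pre_gext //.
  by apply: imset_f; exact: setU11.
by rewrite gext_ord0.
Qed.

Lemma L4 (P : {set {set 'I_n}}) o :
  partition P [set: 'I_n] ->
  [&& partition (ext P o) [set: 'I_n.+1], restrict (ext P o) == P & hinv (ext P o) == o]
  = (o \in set0 |: P).
Proof.
move=> pP; apply/idP/idP; last first.
  by move=> oP; rewrite L2 // L3 // hinv_ext // !eqxx.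
case/and3P=> _ /eqP rP _; rewrite in_setU1.
case: eqP => //= /eqP no0; rewrite -rP !inE no0 /=.
rewrite -{1}(pre_gext o o); apply: imset_f; apply: imset_f; exact: setU11.
Qed.

Lemma setD1_notin (T : finType) (A : {set T}) a : a \notin A -> A :\ a = A.
Proof. by move=> aA; apply/setP=> x; rewrite !inE; case: eqP => // ->; rewrite (negbTE aA). Qed.

Lemma L5 (Q : {set {set 'I_n.+1}}) :
  partition Q [set: 'I_n.+1] -> ext (restrict Q) (hinv Q) = Q.
Proof.
move=> pQ; case/and3P: (pQ) => /eqP covQ trQ nQ0.
set B0 := pblock Q ord0.
have c0 : ord0 \in cover Q by rewrite covQ inE.
have B0Q : B0 \in Q := pblock_mem c0.
have oB0 : ord0 \in B0 by rewrite mem_pblock.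
set o := hinv Q.
have claim : {in Q, forall B, gext o (pre B) = B}.
  move=> B BQ; case: (B =P B0) => [-> | neB].
    by rewrite /gext eqxx liftS_pre setD1K.
  have nB0 : ord0 \notin B.
    by apply/negP=> oB; apply: neB; rewrite /B0 (def_pblock trQ BQ oB).
  have ne : pre B != o.
    have : B != set0 by apply: contraNneq nQ0 => <-.
    case/set0Pn=> j jB; move: jB nB0; case: (unliftP ord0 j) => [i -> | -> ->//] iB _.
    apply/eqP=> /setP/(_ i); rewrite /o /hinv !inE iB => /esym.
    have := trivIsetP trQ _ _ BQ B0Q (introN eqP neB).
    by move/disjointFr/(_ iB) ->.
  by rewrite /gext (negbTE ne) liftS_pre setD1_notin.
have X : o |: restrict Q = [set pre B | B in Q].
  apply/setP=> C; rewrite in_setU1 !inE; apply/idP/idP.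
    case/orP=> [/eqP -> | /andP[_ //]]; exact: imset_f.
  move=> CQ; rewrite CQ andbT; have [C0|] := eqVneq C set0; last by rewrite orbT.
  move/imsetP: CQ => [B BQ eC]; apply/orP; left; apply/eqP.
  have : B != set0 by apply: contraNneq nQ0 => <-.
  case/set0Pn=> j; case: (unliftP ord0 j) => [i -> | ->] jB.
    by move: C0; rewrite eC => /setP/(_ i); rewrite !inE jB.
  by rewrite eC /o /hinv /B0 (def_pblock trQ BQ jB).
rewrite /ext X -imset_comp (eq_in_imset claim) imset_id //.
Qed.
Local Open Scope ring_scope.
Lemma sum_part (R : nmodType) (G : {set {set 'I_n.+1}} -> R) :
  \sum_(Q | partition Q [set: 'I_n.+1]) G Q =
  \sum_(P | partition P [set: 'I_n]) \sum_(o in set0 |: P) G (ext P o).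
Proof.
rewrite (partition_big restrict (fun P => partition P [set: 'I_n])); last exact: L1.
apply: eq_bigr => P pP.
rewrite (reindex_onto (ext P) hinv); last first.
  by move=> Q /andP[pQ /eqP <-]; exact: L5.
by apply: eq_bigl => o; rewrite -andbA L4.
Qed.
End Comb.

Lemma sort_ord_eq m (s t : seq 'I_m) :
  perm_eq s t -> sorted (fun i j : 'I_m => (i <= j)%N) t ->
  sort (fun i j : 'I_m => (i <= j)%N) s = t.
Proof.
move=> pst st.
have -> : sort (fun i j : 'I_m => (i <= j)%N) s = sort (fun i j : 'I_m => (i <= j)%N) t.
  apply/perm_sortP => //.
  - by move=> i j; exact: leq_total.
  - by move=> i j k; exact: leq_trans.
  - by move=> i j /anti_leq/val_inj.
by apply: sorted_sort => // i j k; exact: leq_trans.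
Qed.

Lemma perm_enum_imset (T T' : finType) (f : T -> T') (A : {set T}) t :
  injective f -> perm_eq (enum A) t -> perm_eq (enum (f @: A)) (map f t).
Proof.
move=> fi pt; apply: uniq_perm; first exact: enum_uniq.
  by rewrite (map_inj_uniq fi) -(perm_uniq pt) enum_uniq.
move=> x; rewrite mem_enum; apply/imsetP/mapP => -[a aA ->]; exists a => //.
  by rewrite -(perm_mem pt) mem_enum.
by rewrite -mem_enum (perm_mem pt).
Qed.

Lemma perm_enum_setU1 (T : finType) (a : T) (A : {set T}) t :
  a \notin A -> perm_eq (enum A) t -> perm_eq (enum (a |: A)) (a :: t).
Proof.
move=> aA pt; apply: uniq_perm; first exact: enum_uniq.
  by rewrite /= -(perm_uniq pt) enum_uniq -(perm_mem pt) mem_enum aA.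
by move=> x; rewrite mem_enum in_setU1 in_cons -(perm_mem pt) mem_enum.
Qed.

Lemma maxS m (B : {set 'I_m}) : B != set0 ->
  (\max_(i in B) (i : nat).+1 = (\max_(i in B) (i : nat)).+1)%N.
Proof.
move=> nB; apply/eqP; rewrite eqn_leq; apply/andP; split.
  apply/bigmax_leqP => i iB; rewrite ltnS.
  exact: (@leq_bigmax_cond _ (fun j => j \in B) (fun j : 'I_m => (j : nat)) i iB).
have cB : (0 < #|B|)%N by rewrite card_gt0.
have [i0 i0B ->] := eq_bigmax_cond (fun i : 'I_m => (i : nat)) cB.
exact: (@leq_bigmax_cond _ (fun j => j \in B) (fun j : 'I_m => (j : nat).+1) i0 i0B).
Qed.

Lemma bm_eq m (Q : {set {set 'I_m}}) B C :
  trivIset Q -> set0 \notin Q -> B \in Q -> C \in Q -> block_max B = block_max C -> B = C.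
Proof.
move=> trQ nQ0 BQ CQ e.
have cB : (0 < #|B|)%N by rewrite card_gt0; apply: contraNneq nQ0 => <-.
have cC : (0 < #|C|)%N by rewrite card_gt0; apply: contraNneq nQ0 => <-.
move: e; rewrite /block_max.
have [i0 i0B ->] := eq_bigmax_cond (fun i : 'I_m => (i : nat)) cB.
have [j0 j0C ->] := eq_bigmax_cond (fun i : 'I_m => (i : nat)) cC.
move/val_inj => e; subst j0.
apply/eqP; apply: contraTT isT => ne.
by have := trivIsetP trQ _ _ BQ CQ ne; move/disjointFr/(_ i0B); rewrite j0C.
Qed.

Lemma sorted_blocks_eq m (Q : {set {set 'I_m}}) s :
  trivIset Q -> set0 \notin Q -> perm_eq (enum Q) s ->
  sorted (fun B C => (block_max B <= block_max C)%N) s -> sorted_blocks Q = s.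
Proof.
move=> trQ nQ0 ps ss; rewrite /sorted_blocks.
have -> : sort (fun B C => (block_max B <= block_max C)%N) (enum Q) =
          sort (fun B C => (block_max B <= block_max C)%N) s.
  apply/perm_sort_inP => //.
  - by move=> B C _ _; exact: leq_total.
  - by move=> B C D _ _ _; exact: leq_trans.
  - move=> B C; rewrite !mem_enum => BQ CQ /andP[h1 h2]; apply: (bm_eq trQ nQ0 BQ CQ); exact: anti_leq (introT andP (conj h1 h2)).
by apply: sorted_sort => // B C D; exact: leq_trans.
Qed.

Lemma bm_liftS n (B : {set 'I_n}) : B != set0 -> block_max (liftS B) = (block_max B).+1.
Proof.
move=> nB; rewrite /block_max /liftS big_imset /=; last by move=> i j _ _; exact: lft_inj.
rewrite -maxS //; apply: eq_bigr => i _; by rewrite /lft lift0.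
Qed.

Lemma bm_0liftS n (B : {set 'I_n}) : B != set0 -> block_max (ord0 |: liftS B) = (block_max B).+1.
Proof.
move=> nB; rewrite /block_max big_setU1 /=; last by rewrite ord0_liftS.
by have := bm_liftS nB; rewrite /block_max => ->; rewrite max0n.
Qed.

Lemma bm_set0 n : block_max [set (ord0 : 'I_n.+1)] = 0%N.
Proof. by rewrite /block_max big_set1. Qed.

Section BV.
Variables (F : fieldType) (M : lmodType F) (rhdM : M -> M -> M) (n : nat) (y : 'I_n.+1 -> M).
Let y' := fun i => y (lft i).
Local Notation r m := (fun i j : 'I_m => (i <= j)%N).

Lemma sort_liftS (B : {set 'I_n}) :
  sort (r n.+1) (enum (liftS B)) = map (@lft n) (sort (r n) (enum B)).
Proof.
apply: sort_ord_eq.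
  by apply: perm_enum_imset; [exact: lft_inj | rewrite perm_sym perm_sort].
rewrite sorted_map; apply: (@sub_sorted _ (r n)); last first.
  by apply: sort_sorted => i j; exact: leq_total.
by move=> i j; rewrite /relpre /= /bump !add1n ltnS.
Qed.

Lemma bv_liftS (B : {set 'I_n}) : block_val rhdM y (liftS B) = block_val rhdM y' B.
Proof.
rewrite /block_val sort_liftS.
by case: (sort (r n) (enum B)) => [|b bs] //=; rewrite -map_comp.
Qed.

Lemma bv_0liftS (B : {set 'I_n}) : B != set0 ->
  block_val rhdM y (ord0 |: liftS B) = rhdM (y ord0) (block_val rhdM y' B).
Proof.
move=> nB; rewrite /block_val.
have -> : sort (r n.+1) (enum (ord0 |: liftS B)) = ord0 :: map (@lft n) (sort (r n) (enum B)).
  apply: sort_ord_eq.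
    apply: perm_enum_setU1; first by rewrite ord0_liftS.
    by apply: perm_enum_imset; [exact: lft_inj | rewrite perm_sym perm_sort].
  have : sorted (r n.+1) (map (@lft n) (sort (r n) (enum B))).
    rewrite sorted_map; apply: (@sub_sorted _ (r n)); last first.
      by apply: sort_sorted => i j; exact: leq_total.
    by move=> i j; rewrite /relpre /= /bump !add1n ltnS.
  by case: (map (@lft n) _) => //= a l ->; rewrite andbT.
case E: (sort (r n) (enum B)) => [|b bs] /=.
  case/set0Pn: nB => i iB.
  by have := mem_sort (r n) (enum B) i; rewrite E in_nil mem_enum iB.
by rewrite -map_comp.
Qed.

Lemma bv_set0 : block_val rhdM y [set ord0] = y ord0.
Proof. by rewrite /block_val enum_set1. Qed.


Definition key m (B : {set 'I_m}) := if B == set0 then 0%N else (block_max B).+1.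

Lemma bm_gext (P : {set {set 'I_n}}) o B : set0 \notin P -> o \in set0 |: P -> B \in o |: P ->
  block_max (gext o B) = key B.
Proof.
move=> nP0 oP BP; rewrite /gext /key; case: (B =P o) => [-> | neBo].
  case: (o =P set0) => [-> | /eqP no0]; first by rewrite liftS0 setU0 bm_set0.
  by rewrite bm_0liftS.
have BP' : B \in P by move: BP; rewrite in_setU1 => /orP[/eqP e0|]; [case: (neBo e0)|].
have nB : B != set0 by apply: contraNneq nP0 => <-.
by rewrite (negbTE nB) bm_liftS.
Qed.

Lemma sb_ext (P : {set {set 'I_n}}) o t : partition P [set: 'I_n] -> o \in set0 |: P ->
  perm_eq (enum (o |: P)) t -> sorted leq (map (@key n) t) ->
  sorted_blocks (ext P o) = map (gext o) t.
Proof.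
move=> pP oP pt st; have /and3P[_ tr n0] := L2 pP oP.
case/and3P: pP => _ _ nP0.
apply: sorted_blocks_eq => //; first exact: perm_enum_imset (@gext_inj n o) pt.
suff : sorted leq (map (@block_max n.+1) (map (gext o) t)) by rewrite sorted_map.
rewrite -map_comp; have -> : map (block_max (n:=n.+1) \o gext o) t = map (@key n) t.
  apply/eq_in_map => B Bt /=.
  by apply: (@bm_gext P) => //; move: Bt; rewrite -(perm_mem pt) mem_enum.
exact: st.
Qed.

Lemma sorted_key (P : {set {set 'I_n}}) : set0 \notin P ->
  sorted leq (map (@key n) (sorted_blocks P)).
Proof.
move=> nP0.
have -> : map (@key n) (sorted_blocks P) = map succn (map (@block_max n) (sorted_blocks P)).
  rewrite -map_comp; apply/eq_in_map => B; rewrite /sorted_blocks mem_sort mem_enum => BP /=.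
  by rewrite /key; case: eqP => // e; move: nP0; rewrite -e BP.
rewrite sorted_map (eq_sorted (e' := leq)); last by move=> a b /=; rewrite ltnS.
rewrite sorted_map; apply: sort_sorted => B C; exact: leq_total.
Qed.

Local Open Scope ring_scope.

Lemma W0 (A : algType F) (iota : M -> A) (P : {set {set 'I_n}}) :
  partition P [set: 'I_n] ->
  part_word rhdM y iota (ext P set0) = iota (y ord0) * part_word rhdM y' iota P.
Proof.
move=> pP; have nP0 : set0 \notin P by case/and3P: pP.
have sb : sorted_blocks (ext P set0) = map (gext set0) (set0 :: sorted_blocks P).
  apply: sb_ext => //; first exact: setU11.
    by apply: perm_enum_setU1 => //; rewrite perm_sym perm_sort.
  have k0 : @key n set0 = 0%N by rewrite /key; case: eqP.
  rewrite map_cons k0; have := sorted_key nP0.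
  by case: (map _ _) => //= a l ->; rewrite andbT.
rewrite /part_word sb big_map big_cons.
have -> : gext (set0 : {set 'I_n}) set0 = [set ord0] by rewrite /gext eqxx liftS0 setU0.
rewrite bv_set0; congr (_ * _).
rewrite big_seq [in RHS]big_seq; apply: eq_bigr => B.
rewrite /sorted_blocks mem_sort mem_enum => BP.
have nB : B != set0 by apply: contraNneq nP0 => <-.
by rewrite /gext (negbTE nB) bv_liftS.
Qed.

Lemma W1 (A : algType F) (iota : M -> A) (P : {set {set 'I_n}}) o :
  partition P [set: 'I_n] -> o \in P ->
  part_word rhdM y iota (ext P o) =
  \prod_(B <- sorted_blocks P)
     iota (if B == o then rhdM (y ord0) (block_val rhdM y' B) else block_val rhdM y' B).
Proof.
move=> pP oP; have nP0 : set0 \notin P by case/and3P: pP.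
have eP : o |: P = P.
  by apply/setP=> C; rewrite in_setU1; case: eqP => // ->; rewrite oP.
have sb : sorted_blocks (ext P o) = map (gext o) (sorted_blocks P).
  apply: sb_ext => //; first by rewrite in_setU1 oP orbT.
    by rewrite eP perm_sym perm_sort.
  exact: sorted_key.
rewrite /part_word sb big_map.
rewrite big_seq [in RHS]big_seq; apply: eq_bigr => B.
rewrite /sorted_blocks mem_sort mem_enum => BP.
have nB : B != set0 by apply: contraNneq nP0 => <-.
rewrite /gext; case: eqP => _; first by rewrite bv_0liftS.
by rewrite bv_liftS.
Qed.

End BV.

Local Open Scope ring_scope.

Lemma rhd_der_prod (F : fieldType) (M : lmodType F) (A : algType F) (iota : M -> A)
  (rhdM : M -> M -> M) (rhd : A -> A -> A)
  (rhdD : forall W U U', rhd W (U + U') = rhd W U + rhd W U')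
  (rhd_M : forall x x' : M, rhd (iota x) (iota x') = iota (rhdM x x'))
  (rhd_der : forall (x : M) (V W : A),
      rhd (iota x) (V * W) = rhd (iota x) V * W + V * rhd (iota x) W)
  (rhd0 : forall W, rhd W 0 = 0)
  (rhd1 : forall x, rhd (iota x) 1 = 0)
  (T : eqType) (f : T -> M) (x : M) (s : seq T) :
  uniq s ->
  rhd (iota x) (\prod_(B <- s) iota (f B)) =
  \sum_(o <- s) \prod_(B <- s) iota (if B == o then rhdM x (f B) else f B).
Proof.
have rhd_sum : forall W (r : seq T) (G : T -> A),
    rhd W (\sum_(i <- r) G i) = \sum_(i <- r) rhd W (G i).
  move=> W r G; elim: r => [|a r IH]; first by rewrite !big_nil rhd0.
  by rewrite !big_cons rhdD IH.
elim: s => [|a s IH]; first by rewrite !big_nil rhd1.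
move=> /= /andP[aS us].
rewrite big_cons rhd_der rhd_M IH // big_cons; congr (_ + _).
  rewrite big_cons eqxx; congr (_ * _).
  apply: eq_big_seq => B Bs.
  by case: eqP => // eB; move: aS; rewrite -eB Bs.
rewrite mulr_sumr; apply: eq_big_seq => o os.
rewrite big_cons; case: eqP => [eo|_]; last by [].
by move: aS; rewrite eo os.
Qed.

Lemma part0 (P : {set {set 'I_0}}) : partition P [set: 'I_0] = (P == set0).
Proof.
have eT : [set: 'I_0] = set0 by apply/setP => -[].
case: (P =P set0) => [-> | /eqP nP].
  by rewrite /partition /trivIset /cover !big_set0 cards0 eT !eqxx inE.
case/set0Pn: nP => B BP.
have eB : B = set0 by apply/setP => -[].
by rewrite /partition -eB BP !andbF.
Qed.

Theorem proposition2p19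
  (* k : a field of characteristic zero *)
  (F : fieldType) (charF0 : [pchar F] =i pred0)
  (* (M, ▷) : a magmatic algebra over k *)
  (M : lmodType F) (rhdM : M -> M -> M)
  (rhdM_linl : forall (a : F) (x x' z : M),
      rhdM (a *: x + x') z = a *: rhdM x z + rhdM x' z)
  (rhdM_linr : forall (a : F) (z x x' : M),
      rhdM z (a *: x + x') = a *: rhdM z x + rhdM z x')
  (* (A, iota) : the tensor algebra T(M), given by its universal property *)
  (A : algType F) (iota : {linear M -> A})
  (A_univ : forall (B : algType F) (f : {linear M -> B}),
      exists g : {lrmorphism A -> B},
        (forall x, g (iota x) = f x) /\
        (forall g' : {lrmorphism A -> B}, (forall x, g' (iota x) = f x) -> g' =1 g))
  (* the extension of ▷ to T(M) *)
  (rhd : A -> A -> A)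
  (rhd_linl : forall (a : F) (U U' W : A), rhd (a *: U + U') W = a *: rhd U W + rhd U' W)
  (rhd_linr : forall (a : F) (W U U' : A), rhd W (a *: U + U') = a *: rhd W U + rhd W U')
  (rhd_M : forall x x' : M, rhd (iota x) (iota x') = iota (rhdM x x'))
  (rhd_1 : forall W : A, rhd 1 W = W)
  (rhd_der : forall (x : M) (V W : A),
      rhd (iota x) (V * W) = rhd (iota x) V * W + V * rhd (iota x) W)
  (rhd_mul : forall (x : M) (V W : A),
      rhd (iota x * V) W = rhd (iota x) (rhd V W) - rhd (rhd (iota x) V) W)
  (* Gavrilov's K-map *)
  (K : A -> A)
  (K_lin : forall (a : F) (U U' : A), K (a *: U + U') = a *: K U + K U')
  (K_1 : K 1 = 1)
  (K_M : forall x : M, K (iota x) = iota x)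
  (K_rec : forall (x : M) (U : A), K (iota x * U) = iota x * K U - K (rhd (iota x) U))
  (* its inverse K^{-1} *)
  (Kinv : A -> A) (KinvK : cancel K Kinv) (KKinv : cancel Kinv K)
  (n : nat) (y : 'I_n -> M) :
  Kinv (\prod_(i < n) iota (y i)) =
  \sum_(P : {set {set 'I_n}} | partition P [set: 'I_n]) part_word rhdM y iota P.
Proof.
have KD : forall U U', K (U + U') = K U + K U'.
  by move=> U U'; have := K_lin 1 U U'; rewrite !scale1r.
have rhdD : forall W U U', rhd W (U + U') = rhd W U + rhd W U'.
  by move=> W U U'; have := rhd_linr 1 W U U'; rewrite !scale1r.
have rhd0 : forall W, rhd W 0 = 0.
  move=> W; have h := rhdD W 0 0; rewrite addr0 in h.
  by apply: (@addrI _ (rhd W 0)); rewrite addr0 -h.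
have rhd1 : forall x, rhd (iota x) 1 = 0.
  move=> x; have h := rhd_der x 1 1; rewrite !mul1r mulr1 in h.
  by apply: (@addrI _ (rhd (iota x) 1)); rewrite addr0 -h.
have rhd_sum : forall W (I : Type) (r : seq I) (P : pred I) (G : I -> A),
    rhd W (\sum_(i <- r | P i) G i) = \sum_(i <- r | P i) rhd W (G i).
  move=> W I r P G; elim: r => [|a r IH]; first by rewrite !big_nil rhd0.
  by rewrite !big_cons; case: (P a); rewrite ?rhdD IH.
have main : forall m (z : 'I_m -> M),
    K (\sum_(P : {set {set 'I_m}} | partition P [set: 'I_m]) part_word rhdM z iota P) =
    \prod_(i < m) iota (z i).
  elim=> [|m IH] z.
    rewrite big_ord0 (big_pred1 set0); last by move=> P; rewrite part0.
    by rewrite /part_word /sorted_blocks enum_set0 /= big_nil K_1.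
  rewrite sum_part big_ord_recl.
  set z' := fun i => z (lft i).
  have step : forall P : {set {set 'I_m}}, partition P [set: 'I_m] ->
      \sum_(o in set0 |: P) part_word rhdM z iota (ext P o) =
      iota (z ord0) * part_word rhdM z' iota P + rhd (iota (z ord0)) (part_word rhdM z' iota P).
    move=> P pP; have nP0 : set0 \notin P by case/and3P: pP.
    rewrite big_setU1 //= W0 //; congr (_ + _).
    rewrite {2}/part_word (rhd_der_prod rhdD rhd_M rhd_der rhd0 rhd1); last first.
      by rewrite sort_uniq enum_uniq.
    rewrite /sorted_blocks (perm_big _ (permEl (perm_sort _ _))) big_enum /=.
    by apply: eq_bigr => o oP; rewrite W1.
  rewrite (eq_bigr _ step) big_split /= -mulr_sumr -rhd_sum KD K_rec.
  by rewrite subrK IH.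
by rewrite -main KinvK.
Qed.
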